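(* Let $n=2k$ and $\tau$ be positive integers with $1\le\tau\le k$. Let $u_1,\ldots,u_k$ be pairwise distinct elements of $\mathbb{F}_{2^n}$ such that $u_iu_j^{2^k}\in\mathbb{F}_{2^k}^*$ for all $1\le i<j\le k$. Let $F(X_1,\ldots,X_\tau)$ be a reduced polynomial in $\mathbb{F}_2[X_1,\ldots,X_\tau]$ of algebraic degree $d\ge0$, and let $\{i_1,\ldots,i_\tau\}\subseteq\{1,\ldots,k\}$. Then $H(x)=x^{2^k+1}+F(\mathrm{Tr}^n_1(u_{i_1}x),\ldots,\mathrm{Tr}^n_1(u_{i_\tau}x))$ is a vectorial bent $(n,k)$-function. Furthermore, if $u_{i_1},\ldots,u_{i_\tau}$ are linearly independent over $\mathbb{F}_2$ and $d\ge2$, then the algebraic degree of $H$ equals $d$.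
   Context: $\mathrm{Tr}^n_1(x)=\sum_{i=0}^{n-1}x^{2^i}$. $x^{2^k+1}$ takes values in $\mathbb{F}_{2^k}$, so $H:\mathbb{F}_{2^n}\to\mathbb{F}_{2^k}$ (the $F$-term lies in $\mathbb{F}_2$). An $(n,k)$-function $H$ is vectorial bent if every component $\mathrm{Tr}^k_1(\lambda H(x))$, $\lambda\in\mathbb{F}_{2^k}^*$, is a bent Boolean function (i.e. $|\sum_x(-1)^{f(x)+\mathrm{Tr}^n_1(ax)}|=2^{n/2}$ for all $a$). A reduced polynomial is a multilinear polynomial over $\mathbb{F}_2$; its algebraic degree is the largest size of a monomial with nonzero coefficient. The algebraic degree of a vectorial function is the maximum algebraic degree of its coordinate Boolean functions (written as reduced multivariate polynomials over $\mathbb{F}_2$ after identifying $\mathbb{F}_{2^n}$ with $\mathbb{F}_2^n$). *)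

(* Defs.v *)
From HB Require Import structures.
From mathcomp Require Import all_boot all_order all_algebra all_field.
From mathcomp Require Import mpoly.
Set Implicit Arguments. Unset Strict Implicit. Unset Printing Implicit Defensive.
Import Order.TTheory GRing.Theory Num.Theory.
Local Open Scope ring_scope.

Definition Tr (L : finFieldType) (m : nat) (x : L) : L :=
  \sum_(i < m) x ^+ (2 ^ i).

Definition inFk (L : finFieldType) (k : nat) (y : L) : bool := y ^+ (2 ^ k) == y.

Definition L2F (L : finFieldType) (y : L) : 'F_2 := if y == 0 then 0 else 1.
Definition F2L (L : finFieldType) (c : 'F_2) : L := if c == 0 then 0 else 1.

Definition sgnL (L : finFieldType) (y : L) : int := if y == 0 then 1 else -1.

(* Bent Boolean function on L = F_{2^n}, n = 2k (so 2^{n/2} = 2^k). *)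
Definition bent (L : finFieldType) (n k : nat) (f : L -> L) : Prop :=
  (forall x, (f x == 0) || (f x == 1)) /\
  forall a : L, `| \sum_(x : L) sgnL (f x + Tr n (a * x)) | = (2 ^ k)%:R :> int.

Definition vbent (L : finFieldType) (n k : nat) (H : L -> L) : Prop :=
  (forall x, inFk k (H x)) /\
  forall lam : L, inFk k lam -> lam != 0 -> bent n k (fun x => Tr k (lam * H x)).

Definition reduced (m : nat) (P : {mpoly 'F_2[m]}) : Prop :=
  forall mo, mo \in msupp P -> forall i, (mo i <= 1)%N.
(* largest size of a monomial with nonzero coefficient (0 for P = 0) *)
Definition anf_deg (m : nat) (P : {mpoly 'F_2[m]}) : nat := (msize P).-1.

Definition bool_algdeg (m : nat) (f : 'rV['F_2]_m -> 'F_2) (d : nat) : Prop :=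
  exists P : {mpoly 'F_2[m]}, reduced P /\
    (forall x : 'rV['F_2]_m, P.@[fun i => x ord0 i] = f x) /\ anf_deg P = d.

(* Algebraic degree of H : F_{2^n} -> F_{2^k} equals d, for every identification
   of F_{2^n} with F_2^n (an additive, i.e. F_2-linear, bijection phi) and of
   F_{2^k} with F_2^k (an additive map psi bijective from F_{2^k} onto F_2^k):
   the max of the degrees of the coordinate Boolean functions is d. *)
Definition vec_algdeg (L : finFieldType) (n k : nat) (H : L -> L) (d : nat) : Prop :=
  forall (phi : 'rV['F_2]_n -> L) (psi : L -> 'rV['F_2]_k),
    {morph phi : a b / a + b} -> bijective phi ->
    {morph psi : a b / a + b} -> {in inFk k &, injective psi} ->
    (forall v, exists2 y, inFk k y & psi y = v) ->
    exists D : 'I_k -> nat,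
      (forall j, bool_algdeg (fun x => psi (H (phi x)) ord0 j) (D j)) /\
      \max_(j < k) D j = d.

Definition F2_lin_indep (L : finFieldType) (t : nat) (w : 'I_t -> L) : Prop :=
  forall S : {set 'I_t}, \sum_(j in S) w j = 0 -> S = set0.

Definition Hfun (L : finFieldType) (n k tau : nat) (u : 'I_k -> L)
  (idx : 'I_tau -> 'I_k) (F : {mpoly 'F_2[tau]}) (x : L) : L :=
  x ^+ (2 ^ k + 1) + F2L L (F.@[fun j => L2F (Tr n (u (idx j) * x))]).

(* Main.v *)
Require Import Defs.
From HB Require Import structures.
From mathcomp Require Import all_boot all_order all_algebra all_field.
From mathcomp Require Import mpoly.
From mathcomp Require Import zify ring.
Import Order.TTheory GRing.Theory Num.Theory.
Local Open Scope ring_scope.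
Set Implicit Arguments. Unset Strict Implicit.

Section Char2.
Variable L : finFieldType.
Hypothesis two0 : (2%:R : L) = 0.

Lemma addxx (x : L) : x + x = 0.
Proof. by rewrite -mulr2n -mulr_natr two0 mulr0. Qed.

Lemma oppL (x : L) : - x = x.
Proof. by apply/eqP; rewrite eq_sym -subr_eq0 opprK addxx. Qed.

Lemma frob2D (x y : L) : (x + y) ^+ 2 = x ^+ 2 + y ^+ 2.
Proof. by rewrite sqrrD -mulr_natr two0 mulr0 addr0. Qed.

Lemma frobD m (x y : L) : (x + y) ^+ (2 ^ m) = x ^+ (2 ^ m) + y ^+ (2 ^ m).
Proof.
elim: m => [|m IH]; first by rewrite !expr1.
by rewrite expnSr !exprM IH frob2D.
Qed.

Lemma frob0 m : (0 : L) ^+ (2 ^ m) = 0.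
Proof. by rewrite expr0n expn_eq0. Qed.

Lemma frob_sum m (I : Type) (r : seq I) (P : pred I) (G : I -> L) :
  (\sum_(i <- r | P i) G i) ^+ (2 ^ m) = \sum_(i <- r | P i) G i ^+ (2 ^ m).
Proof.
by apply: (big_morph (fun x : L => x ^+ (2 ^ m))); [apply: frobD | apply: frob0].
Qed.

Definition bit (y : L) := (y == 0) || (y == 1).

Lemma bit0 : bit 0. Proof. by rewrite /bit eqxx. Qed.
Lemma bit1 : bit 1. Proof. by rewrite /bit eqxx orbT. Qed.

Lemma bitD (y z : L) : bit y -> bit z -> bit (y + z).
Proof.
by case/orP=> /eqP-> /orP[]/eqP->; rewrite ?addr0 ?add0r ?addxx ?bit0 ?bit1.
Qed.

Lemma sgnLD (y z : L) : bit y -> bit z -> sgnL (y + z) = sgnL y * sgnL z.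
Proof.
rewrite /sgnL.
by case/orP=> /eqP-> /orP[]/eqP->; rewrite ?addr0 ?add0r ?addxx ?eqxx ?oner_eq0 ?mulr1 ?mul1r ?mulrNN ?mulr1.
Qed.

Lemma sgnL_sq (y : L) : sgnL y * sgnL y = 1.
Proof. by rewrite /sgnL; case: (y == 0); rewrite ?mulr1 ?mulrNN ?mulr1. Qed.

Lemma bit_sq (y : L) : y ^+ 2 = y -> bit y.
Proof.
move=> h; have : y * (y - 1) = 0 by rewrite mulrBr mulr1 -expr2 h subrr.
by move/eqP; rewrite mulf_eq0 subr_eq0.
Qed.

Definition Trm := Tr.

Lemma TrD m (x y : L) : Tr m (x + y) = Tr m x + Tr m y.
Proof. by rewrite /Tr -big_split /=; apply: eq_bigr => i _; rewrite frobD. Qed.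

Lemma Tr0 m : Tr m (0 : L) = 0.
Proof. by rewrite /Tr big1 // => i _; rewrite frob0. Qed.

Lemma Tr_sum m (I : Type) (r : seq I) (P : pred I) (G : I -> L) :
  Tr m (\sum_(i <- r | P i) G i) = \sum_(i <- r | P i) Tr m (G i).
Proof. by apply: (big_morph (Tr m)); [apply: TrD | apply: Tr0]. Qed.

Lemma Tr_sq m (y : L) : (Tr m y) ^+ 2 = Tr m y + y + y ^+ (2 ^ m).
Proof.
have h1 : Tr m.+1 y = y + \sum_(i < m) y ^+ (2 ^ i.+1).
  by rewrite /Tr big_ord_recl /= expr1.
have h2 : Tr m.+1 y = Tr m y + y ^+ (2 ^ m) by rewrite /Tr big_ord_recr.
have -> : (Tr m y) ^+ 2 = \sum_(i < m) y ^+ (2 ^ i.+1).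
  rewrite -[X in _ ^+ X]/(2 ^ 1)%N /Tr frob_sum; apply: eq_bigr => i _.
  by rewrite -exprM expn1 expnSr.
have : y + \sum_(i < m) y ^+ (2 ^ i.+1) = Tr m y + y ^+ (2 ^ m) by rewrite -h1 h2.
move/(congr1 (fun z => z + y)); rewrite addrC addrA addxx add0r => ->.
by rewrite -addrA [y ^+ _ + y]addrC addrA.
Qed.

Lemma bitTr m (y : L) : y ^+ (2 ^ m) = y -> bit (Tr m y).
Proof. by move=> h; apply: bit_sq; rewrite Tr_sq h -addrA addxx addr0. Qed.

Lemma Tr_split k (y : L) : Tr (k + k) y = Tr k y + Tr k (y ^+ (2 ^ k)).
Proof.
rewrite /Tr big_split_ord /=; congr (_ + _); apply: eq_bigr => i _.
by rewrite -exprM -expnD.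
Qed.

End Char2.

Lemma nonroot (L : finFieldType) (p : {poly L}) :
  p != 0 -> (size p <= #|L|)%N -> exists y, ~~ root p y.
Proof.
move=> p0 sp; case: (pickP (fun y => ~~ root p y)) => [y hy|h]; first by exists y.
have := max_poly_roots p0 (rs := enum L).
rewrite enum_uniq -cardE ltnNge sp /= => H; suff : false by []; apply: H => //.
by apply/allP => y _; move: (h y) => /negbFE.
Qed.

Section Fq.
Variable L : finFieldType.
Variable k : nat.
Hypothesis hk : (0 < k)%N.
Hypothesis hL : #|L| = (2 ^ (k + k))%N.
Hypothesis two0 : (2%:R : L) = 0.

Local Notation q := (2 ^ k)%N.

Lemma xqq (x : L) : (x ^+ q) ^+ q = x.
Proof. by rewrite -exprM -expnD -hL expf_card. Qed.

Lemma xn (x : L) : x ^+ (2 ^ (k + k)) = x.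
Proof. by rewrite -hL expf_card. Qed.

Lemma inFkP (y : L) : reflect (y ^+ q = y) (inFk k y).
Proof. exact: eqP. Qed.

Lemma inFkM (x y : L) : inFk k x -> inFk k y -> inFk k (x * y).
Proof. by move=> /eqP hx /eqP hy; apply/eqP; rewrite exprMn hx hy. Qed.

Lemma inFkD (x y : L) : inFk k x -> inFk k y -> inFk k (x + y).
Proof. by move=> /eqP hx /eqP hy; apply/eqP; rewrite frobD // hx hy. Qed.

Lemma inFkV (x : L) : inFk k x -> inFk k x^-1.
Proof. by move=> /eqP hx; apply/eqP; rewrite exprVn hx. Qed.

Lemma inFk0 : inFk k (0 : L).
Proof. by apply/eqP; rewrite frob0. Qed.

Lemma inFk1 : inFk k (1 : L).
Proof. by apply/eqP; rewrite expr1n. Qed.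

Lemma inFkN (x : L) : inFk k (x ^+ (q + 1)).
Proof.
apply/eqP; rewrite -exprM mulnDl mul1n exprD exprM xqq exprD expr1 mulrC //.
Qed.

Lemma inFk_sum (I : Type) (r : seq I) (P : pred I) (G : I -> L) :
  (forall i, P i -> inFk k (G i)) -> inFk k (\sum_(i <- r | P i) G i).
Proof. by move=> h; apply: (big_ind (fun y => inFk k y)) => //; [apply: inFk0 | apply: inFkD]. Qed.

Lemma bitTrk (y : L) : inFk k y -> bit (Tr k y).
Proof. by move/eqP; apply: bitTr. Qed.

Lemma bitTrn (y : L) : bit (Tr (k + k) y).
Proof. by apply: bitTr => //; rewrite xn. Qed.

Lemma TrnFq (y : L) : inFk k y -> Tr (k + k) y = 0.
Proof. by move=> /eqP hy; rewrite Tr_split // hy addxx. Qed.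

Lemma Trn_split (y : L) : Tr (k + k) y = Tr k y + Tr k (y ^+ q).
Proof. exact: Tr_split. Qed.

Lemma Tr_nonzero : exists y : L, Tr (k + k) y != 0.
Proof.
pose p : {poly L} := \sum_(i < k + k) 'X^(2 ^ i).
have hp y : p.[y] = Tr (k + k) y.
  by rewrite /p horner_sum /Tr; apply: eq_bigr => i _; rewrite hornerXn.
have k0 : (0 < k + k)%N by lia.
have p0 : p != 0.
  apply/eqP => /(congr1 (fun r : {poly L} => r`_1)).
  rewrite coef0 /p coef_sum (bigD1 (Ordinal k0)) //= big1 ?addr0.
    by rewrite expn0 coefXn eqxx; apply/eqP; rewrite oner_eq0.
  move=> i /eqP hi; rewrite coefXn; case: eqP => // h1.
  have : (2 ^ i == 2 ^ 0)%N by rewrite -h1.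
  rewrite eqn_exp2l // => /eqP hi0; case: hi; apply: val_inj => /=; lia.
have sp : (size p <= #|L|)%N.
  apply: (leq_trans (size_sum _ _ _)); apply/bigmax_leqP => i _.
  rewrite size_polyXn hL.
  have : (2 ^ i < 2 ^ (k + k))%N by rewrite ltn_exp2l.
  done.
have [y hy] := nonroot p0 sp; exists y; by rewrite -hp.
Qed.

Lemma notFq : exists y : L, y ^+ q != y.
Proof.
pose p : {poly L} := 'X^q - 'X.
have q1 : (1 < q)%N by rewrite -{1}(expn0 2) ltn_exp2l.
have sz : size p = q.+1.
  by rewrite /p size_polyDl ?size_polyXn // size_polyN size_polyX ltnS.
have p0 : p != 0 by rewrite -size_poly_eq0 sz.
have sp : (size p <= #|L|)%N.
  rewrite sz hL expnD; have := expn_gt0 2 k; nia.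
have [y hy] := nonroot p0 sp; exists y.
by move: hy; rewrite /root /p !hornerE subr_eq0.
Qed.

Lemma charsum (c : L) :
  \sum_(x : L) sgnL (Tr (k + k) (c * x)) = if c == 0 then (#|L|)%:R else 0 :> int.
Proof.
case: eqP => [->|/eqP c0].
  under eq_bigr do rewrite mul0r Tr0 // /sgnL eqxx.
  by rewrite sumr_const.
have [y hy] := Tr_nonzero.
pose x0 := c^-1 * y.
have h1 : Tr (k + k) (c * x0) = 1.
  rewrite /x0 mulrA mulfV // mul1r.
  by case/orP: (bitTrn y) => /eqP h //; move: hy; rewrite h eqxx.
set S := \sum_x _.
have : S = - S.
  rewrite {1}/S (reindex_inj (addIr x0)) /= -sumrN; apply: eq_bigr => x _.
  rewrite mulrDr TrD // h1 sgnLD // ?bitTrn ?bit1 //.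
  by rewrite /sgnL oner_eq0 mulrN1.
by move/eqP; rewrite -addr_eq0 -mulr2n mulrn_eq0 /= => /eqP.
Qed.

End Fq.

Section Fourier.
Variable t : nat.
Implicit Types s Z A C : {set 'I_t}.

Definition chi s Z : int := \prod_(j in s) (if j \in Z then -1 else 1).
Definition sdiff Z C : {set 'I_t} := [set j | (j \in Z) != (j \in C)].

Lemma chiM s Z C : chi s Z * chi s C = chi s (sdiff Z C).
Proof.
rewrite /chi -big_split /=; apply: eq_bigr => j _; rewrite inE.
by case: (j \in Z); case: (j \in C); rewrite ?mulrNN ?mulr1 ?mulN1r ?mul1r.
Qed.

Definition toggle (a : 'I_t) s := if a \in s then s :\ a else a |: s.

Lemma toggleK a : involutive (toggle a).
Proof.
move=> s; rewrite /toggle; case ha: (a \in s).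
  by rewrite !inE eqxx /= setD1K.
by rewrite setU11 setU1K ?ha.
Qed.


Lemma chi_toggleE a s A : a \in A -> chi (toggle a s) A = - chi s A.
Proof.
move=> aA; rewrite /toggle /chi; case ha: (a \in s).
  by rewrite [in RHS](big_setD1 a) //= aA mulN1r opprK.
by rewrite big_setU1 /= ?ha // aA mulN1r.
Qed.

Lemma chi_sum A : \sum_s chi s A = if A == set0 then (2 ^ t)%:R else 0.
Proof.
case: eqP => [->|/eqP /set0Pn [a aA]].
  have h s : chi s set0 = 1 by rewrite /chi big1 // => j _; rewrite inE.
  under eq_bigr do rewrite h.
  rewrite sumr_const; congr (_ %:R).
  have -> : (2 ^ t = #|powerset [set: 'I_t]|)%N by rewrite card_powerset cardsT card_ord.
  by rewrite powersetT cardsT.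
set S := \sum_s _.
have : S = - S.
  rewrite {1}/S (reindex_inj (can_inj (toggleK a))) /= -sumrN.
  by apply: eq_bigr => s _; rewrite chi_toggleE.
by move/eqP; rewrite -addr_eq0 -mulr2n mulrn_eq0 /= => /eqP.
Qed.

Lemma sdiff0 Z C : (sdiff Z C == set0) = (Z == C).
Proof.
apply/eqP/eqP => [h|->]; last by apply/setP => j; rewrite !inE eqxx.
apply/setP => j; move/setP: h => /(_ j); rewrite !inE.
by case: (j \in Z); case: (j \in C).
Qed.

Lemma fourier (e : {set 'I_t} -> int) C :
  \sum_s (\sum_Z e Z * chi s Z) * chi s C = (2 ^ t)%:R * e C.
Proof.
under eq_bigr do rewrite mulr_suml.
rewrite exchange_big /=.
under eq_bigr => Z _ do (under eq_bigr => s _ do rewrite -mulrA chiM).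
under eq_bigr => Z _ do rewrite -mulr_sumr chi_sum sdiff0.
rewrite (bigD1 C) // eqxx big1 => [|Z /negbTE ->]; last by rewrite mulr0.
by rewrite mulrC; apply: addr0.
Qed.

End Fourier.

Section Signs.
Variable L : finFieldType.
Hypothesis two0 : (2%:R : L) = 0.

Lemma sgnL_sum (I : finType) (P : pred I) (T : I -> L) :
  (forall j, bit (T j)) ->
  bit (\sum_(j | P j) T j) /\
  sgnL (\sum_(j | P j) T j) = \prod_(j | P j) sgnL (T j).
Proof.
move=> hb.
apply: (big_ind2 (fun (y : L) (z : int) => bit y /\ sgnL y = z)).
- by split; [apply: bit0 | rewrite /sgnL eqxx].
- move=> y1 z1 y2 z2 [b1 <-] [b2 <-]; split; first exact: bitD.
  exact: sgnLD.
- by move=> j _; split.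
Qed.

Lemma prod_sgnL (I : finType) (s : {set I}) (T : I -> L) :
  \prod_(j in s) sgnL (T j) = \prod_(j in s) (if j \in [set i | T i != 0] then -1 else 1).
Proof. by apply: eq_bigr => j _; rewrite inE /sgnL; case: (T j == 0). Qed.

End Signs.

Section Bent.
Variable L : finFieldType.
Variable k : nat.
Hypothesis hk : (0 < k)%N.
Hypothesis hL : #|L| = (2 ^ (k + k))%N.
Hypothesis two0 : (2%:R : L) = 0.
Local Notation q := (2 ^ k)%N.
Local Notation Trn := (Tr (k + k)).
Variable lam : L.
Hypothesis hlam : inFk k lam.
Hypothesis lam0 : lam != 0.

Definition g (x : L) := Tr k (lam * x ^+ (q + 1)).
Definition G (b x : L) := sgnL (g x + Trn (b * x)).
Definition W (b : L) := \sum_(x : L) G b x.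

Lemma lamq : lam ^+ q = lam. Proof. exact/eqP. Qed.

Lemma bitg x : bit (g x).
Proof. by apply: bitTrk => //; apply: inFkM => //; apply: inFkN. Qed.

Lemma expq1 (x : L) : x ^+ (q + 1) = x ^+ q * x.
Proof. by rewrite exprD expr1. Qed.

Lemma g_add x e : g (x + e) = g x + g e + Trn (lam * e ^+ q * x).
Proof.
rewrite /g !expq1 frobD // Trn_split //.
have -> : (lam * e ^+ q * x) ^+ q = lam * x ^+ q * e.
  by rewrite !exprMn lamq xqq // mulrAC.
rewrite -!TrD //; congr (Tr k _).
move: (x ^+ q) (e ^+ q) => X E; clear; ring.
Qed.

Lemma G_prod b b' x e :
  G b x * G b' (x + e) =
  sgnL (g e + Trn (b' * e)) * sgnL (Trn ((b + b' + lam * e ^+ q) * x)).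
Proof.
have bt y : bit (Trn y) := bitTrn hL two0 y.
rewrite /G -sgnLD ?bitD ?bitg ?bt // -sgnLD ?bitD ?bitg ?bt //.
congr sgnL; rewrite g_add (mulrDr b') !mulrDl !TrD //.
set A := g x; set B := Trn (b * x); set C := g e; set T1 := Trn (b' * x).
set T2 := Trn (b' * e); set T3 := Trn (lam * e ^+ q * x).
have -> : A + B + (A + C + T3 + (T1 + T2)) = 2%:R * A + (C + T2 + (B + T1 + T3)) by clear; ring.
by rewrite two0 mul0r add0r.
Qed.

Lemma frobq_inj (x y : L) : x ^+ q = y ^+ q -> x = y.
Proof. by move=> h; rewrite -(xqq hL x) h xqq. Qed.

Lemma WW b b' e0 : lam * e0 ^+ q = b + b' ->
  W b * W b' = (#|L|)%:R * sgnL (g e0 + Trn (b' * e0)).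
Proof.
move=> he0.
rewrite /W mulr_suml.
under eq_bigr => x _ do rewrite mulr_sumr (reindex_inj (addrI x)) /=.
rewrite exchange_big /=.
under eq_bigr => e _ do (under eq_bigr => x _ do rewrite G_prod; rewrite -mulr_sumr charsum //).
rewrite (bigD1 e0) //= big1 ?addr0.
  have -> : b + b' + lam * e0 ^+ q = 0 by rewrite he0 addxx.
  by rewrite eqxx mulrC.
move=> e /negbTE hne; case: eqP; last by rewrite mulr0.
move=> h; exfalso; move: hne; rewrite (frobq_inj (x := e) (y := e0)) ?eqxx //.
apply: (mulfI lam0); rewrite he0; apply/eqP; rewrite -subr_eq0 oppL //.
by rewrite addrC h.
Qed.

End Bent.

Section BentMain.
Variable L : finFieldType.
Variable k : nat.
Hypothesis hk : (0 < k)%N.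
Hypothesis hL : #|L| = (2 ^ (k + k))%N.
Hypothesis two0 : (2%:R : L) = 0.
Local Notation q := (2 ^ k)%N.
Local Notation Trn := (Tr (k + k)).
Variable lam : L.
Hypothesis hlam : inFk k lam.
Hypothesis lam0 : lam != 0.
Variable t : nat.
Variable v : 'I_t -> L.
Hypothesis hv : forall i j, inFk k (v i * v j ^+ q).
Variable a : L.

Definition vs (s : {set 'I_t}) := \sum_(j in s) v j.
Definition zset (x : L) := [set j | Trn (v j * x) != 0].
Definition gam (w : L) := Tr k (w ^+ (q + 1) / lam) + Trn (a * (w / lam) ^+ q).
Definition spanP (y : L) := forall j, inFk k (v j ^+ q * y).

Lemma spanP_vs s : spanP (vs s).
Proof.
move=> j; rewrite /vs mulr_sumr; apply: inFk_sum => // i _.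
by rewrite mulrC.
Qed.

Lemma spanP0 : spanP 0.
Proof. by move=> j; rewrite mulr0; apply: inFk0. Qed.

Lemma spanPD (y z : L) : spanP y -> spanP z -> spanP (y + z).
Proof. by move=> hy hz j; rewrite mulrDr; apply: inFkD => //; first [exact: hy | exact: hz]. Qed.

Lemma inFk_cross s (w : L) : spanP w -> inFk k (vs s ^+ q * w).
Proof.
move=> hw; rewrite /vs frob_sum // mulr_suml; apply: inFk_sum => // i _; exact: hw.
Qed.

Lemma N_add (w w' : L) : inFk k (w ^+ q * w') ->
  (w + w') ^+ (q + 1) = w ^+ (q + 1) + w' ^+ (q + 1).
Proof.
move=> /eqP h.
have h2 : w' ^+ q * w = w ^+ q * w'.
  by rewrite -[in RHS]h exprMn xqq // mulrC.
rewrite !expq1 frobD // mulrDl !mulrDr h2.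
have -> : w ^+ q * w + w ^+ q * w' + (w ^+ q * w' + w' ^+ q * w') =
  w ^+ q * w + w' ^+ q * w' + (w ^+ q * w' + w ^+ q * w') by clear; ring.
by rewrite addxx // addr0.
Qed.

Lemma gam0 : gam 0 = 0.
Proof.
rewrite /gam expr0n addn1 /= !mul0r frob0 // mulr0 !Tr0 //; apply: addr0.
Qed.

Lemma gam_add (w w' : L) : inFk k (w ^+ q * w') -> gam (w + w') = gam w + gam w'.
Proof.
move=> h; rewrite /gam N_add // mulrDl TrD // mulrDl frobD // mulrDr TrD //.
by clear; ring.
Qed.

Lemma bit_gam (w : L) : bit (gam w).
Proof.
apply: bitD => //; last exact: bitTrn.
apply: bitTrk => //; apply: inFkM => //; [apply: inFkN | apply: inFkV] => //.
Qed.

Lemma gam_vs s : gam (vs s) = \sum_(j in s) gam (v j).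
Proof.
rewrite /vs.
have : gam (\sum_(j in s) v j) = \sum_(j in s) gam (v j) /\ spanP (\sum_(j in s) v j).
  apply: (big_rec2 (fun y1 y2 => gam y1 = y2 /\ spanP y1)).
    by split; [apply: gam0 | apply: spanP0].
  move=> i y1 y2 _ [<- hy]; split; last first.
    by apply: spanPD => // j; rewrite mulrC.
  by rewrite gam_add //; apply: hy.
by case.
Qed.

Definition Cset := [set j | gam (v j) != 0].

Lemma omega s : sgnL (gam (vs s)) = chi s Cset.
Proof.
rewrite gam_vs; have [_ ->] := sgnL_sum two0 (mem s) (fun j => bit_gam (v j)).
exact: prod_sgnL.
Qed.

End BentMain.

Section BentMain2.
Variable L : finFieldType.
Variable k : nat.
Hypothesis hk : (0 < k)%N.
Hypothesis hL : #|L| = (2 ^ (k + k))%N.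
Hypothesis two0 : (2%:R : L) = 0.
Local Notation q := (2 ^ k)%N.
Local Notation Trn := (Tr (k + k)).
Variable lam : L.
Hypothesis hlam : inFk k lam.
Hypothesis lam0 : lam != 0.
Variable t : nat.
Variable v : 'I_t -> L.
Hypothesis hv : forall i j, inFk k (v i * v j ^+ q).
Variable a : L.

Local Notation gam := (gam k lam a).
Local Notation vs := (vs v).

Lemma key s s' e0 : e0 = ((vs s + vs s') / lam) ^+ q ->
  g k lam e0 + Trn ((a + vs s') * e0) = gam (vs s) + gam (vs s').
Proof.
move=> he0; set w := vs s; set w' := vs s'.
have c1 : inFk k (w ^+ q * w') by apply: inFk_cross => //; apply: spanP_vs.
have c2 : inFk k (w' ^+ q * w') by apply: inFk_cross => //; apply: spanP_vs.
have lq : lam ^+ q = lam by apply/eqP.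
have hg : lam * e0 ^+ (q + 1) = w ^+ (q + 1) / lam + w' ^+ (q + 1) / lam.
  have -> : e0 ^+ (q + 1) = ((w + w') / lam) ^+ (q + 1).
    by rewrite he0 -exprM mulnC exprM; apply/eqP; apply: inFkN.
  rewrite exprMn exprVn [lam ^+ _]expq1 lq -mulrDl -N_add //.
  by rewrite invfM mulrCA; congr (_ * _); rewrite mulrA mulfV // mul1r.
have hz : e0 = (w / lam) ^+ q + (w' / lam) ^+ q by rewrite he0 mulrDl frobD.
have h0 : Trn (w' * e0) = 0.
  apply: TrnFq => //; rewrite he0 exprMn exprVn lq mulrA.
  apply: inFkM => //; last by apply: inFkV.
  rewrite frobD // mulrDr; apply: inFkD => //; rewrite mulrC //.
rewrite /g hg TrD // mulrDl TrD // h0 addr0 hz mulrDr TrD //.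
rewrite /gam.
by clear; ring.
Qed.


Local Notation C := (Cset k lam v a).

Lemma hchi s x : chi s (zset k v x) = sgnL (Trn (vs s * x)).
Proof.
rewrite /vs mulr_suml Tr_sum //.
have [_ ->] := sgnL_sum two0 (mem s) (fun j => bitTrn hL two0 (v j * x)).
by rewrite prod_sgnL.
Qed.

Lemma hG s x : G k lam a x * sgnL (Trn (vs s * x)) = G k lam (a + vs s) x.
Proof.
by rewrite /G -sgnLD ?bitD ?bitg ?bitTrn // mulrDl TrD // addrA.
Qed.

Lemma h4 s s' : W k lam (a + vs s) * W k lam (a + vs s') =
  (#|L|)%:R * (chi s C * chi s' C).
Proof.
rewrite (WW hk hL two0 hlam lam0 (e0 := ((vs s + vs s') / lam) ^+ q)).
  rewrite (key (s := s) (s' := s')) // sgnLD ?bit_gam //.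
  by rewrite !(omega hL two0 hlam hv).
rewrite xqq // mulrC divfK //.
have -> : (a + vs s) + (a + vs s') = 2%:R * a + (vs s + vs s') by clear; ring.
by rewrite two0 mul0r add0r.
Qed.

Lemma Wsq (eZ : {set 'I_t} -> int) (eps : L -> int) :
  (forall x, eps x = eZ (zset k v x)) -> (forall Z, eZ Z * eZ Z = 1) ->
  (\sum_x G k lam a x * eps x) ^+ 2 = (#|L|)%:R.
Proof.
move=> heps heZ.
pose E s := \sum_Z eZ Z * chi s Z.
have h3 : (2 ^ t)%:R * (\sum_x G k lam a x * eps x) = \sum_s E s * W k lam (a + vs s).
  rewrite mulr_sumr.
  under eq_bigr => x _ do rewrite mulrCA heps -fourier mulr_sumr.
  rewrite exchange_big; apply: eq_bigr => s _; rewrite /W mulr_sumr.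
  by apply: eq_bigr => x _; rewrite mulrCA hchi hG.
have h5 : ((2 ^ t)%:R * (\sum_x G k lam a x * eps x)) ^+ 2 = ((2 ^ t)%:R ^+ 2) * (#|L|)%:R :> int.
  rewrite h3 expr2 big_distrlr /=.
  transitivity (\sum_s \sum_s' (#|L|)%:R * ((E s * chi s C) * (E s' * chi s' C)) : int).
    apply: eq_bigr => s _; apply: eq_bigr => s' _.
    by rewrite mulrACA h4 mulrCA mulrACA.
  under eq_bigr do rewrite -mulr_sumr.
  rewrite -mulr_sumr -big_distrlr /= fourier mulrACA heZ mulr1 mulrC.
  by rewrite expr2.
move: h5; rewrite exprMn => /mulfI; apply.
by rewrite expf_neq0 // pnatr_eq0 expn_eq0.
Qed.

End BentMain2.

Lemma two0_of (L : finFieldType) (n : nat) : #|L| = (2 ^ n)%N -> (2%:R : L) = 0.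
Proof. by move=> h; apply: pcharf0; apply: (card_finPcharP h). Qed.

Lemma absW (W : int) (k : nat) : W ^+ 2 = (2 ^ (k + k))%:R -> `|W| = (2 ^ k)%:R.
Proof.
move=> h; apply/eqP; rewrite -(@eqrXn2 _ 2) ?normr_ge0 ?ler0n //.
by rewrite real_normK ?num_real // h -natrX -expnM mulnC mul2n -addnn.
Qed.

Lemma inFkF2L (L : finFieldType) k (c : 'F_2) : inFk k (F2L L c).
Proof. by rewrite /F2L; case: eqP => _; [apply: inFk0 | apply: inFk1]. Qed.

Section Part1.
Variable L : finFieldType.
Variables k tau : nat.
Hypothesis hk : (0 < k)%N.
Hypothesis hL : #|L| = (2 ^ (k + k))%N.
Variable u : 'I_k -> L.
Variable idx : 'I_tau -> 'I_k.
Variable F : {mpoly 'F_2[tau]}.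
Hypothesis hu : forall i j : 'I_k, (i < j)%N -> inFk k (u i * u j ^+ (2 ^ k)).
Local Notation q := (2 ^ k)%N.

Let two0 := two0_of hL.

Lemma hv_of : forall i j, inFk k (u (idx i) * u (idx j) ^+ q).
Proof.
move=> i j; set a := idx i; set b := idx j.
case: (ltngtP a b) => hab.
- exact: hu.
- have := hu hab; move/eqP => h; apply/eqP.
  have e1 : (u a * u b ^+ q) ^+ q = u b * u a ^+ q by rewrite exprMn xqq // mulrC.
  have e2 : (u b * u a ^+ q) ^+ q = u a * u b ^+ q by rewrite exprMn xqq // mulrC.
  by rewrite e1 -e2 h.
- have -> : a = b by apply: val_inj.
  by rewrite mulrC -expq1; apply: inFkN.
Qed.


Lemma inFkH x : inFk k (Hfun (k + k) u idx F x).
Proof. by rewrite /Hfun; apply: inFkD => //; [apply: inFkN | apply: inFkF2L]. Qed.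

Lemma part1 : vbent (k + k) k (Hfun (k + k) u idx F).
Proof.
split; first exact: inFkH.
move=> lam hlam lam0; split.
  by move=> x; apply: bitTrk => //; apply: inFkM => //; apply: inFkH.
move=> a.
pose v := fun j => u (idx j).
pose c x := F.@[fun j => L2F (Tr (k + k) (v j * x))].
pose eZ (Z : {set 'I_tau}) :=
  sgnL (Tr k (lam * F2L L (F.@[fun j => if j \in Z then 1 else 0]))).
have heps x : sgnL (Tr k (lam * F2L L (c x))) = eZ (zset k v x).
  rewrite /eZ /c; congr (sgnL (Tr k (lam * F2L L _))).
  by apply: meval_eq => j; rewrite /L2F inE; case: eqP.
have heZ Z : eZ Z * eZ Z = 1 by apply: sgnL_sq.
have hsum : \sum_x sgnL (Tr k (lam * Hfun (k + k) u idx F x) + Tr (k + k) (a * x)) =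
  \sum_x G k lam a x * sgnL (Tr k (lam * F2L L (c x))).
  apply: eq_bigr => x _; rewrite /Hfun mulrDr TrD // /G -sgnLD //.
  - by rewrite addrAC.
  - by apply: bitD => //; [apply: bitg | apply: bitTrn].
  - by apply: bitTrk => //; apply: inFkM => //; apply: inFkF2L.
apply: absW; rewrite hsum.
rewrite (Wsq hk hL two0 hlam lam0 hv_of a heps heZ).
by rewrite hL.
Qed.

End Part1.

Lemma F2cases (c : 'F_2) : c = 0 \/ c = 1.
Proof. by case: c => [[|[|//]]] i; [left|right]; apply: val_inj. Qed.
Lemma F2mulxx (c : 'F_2) : c * c = c.
Proof. by case: (F2cases c) => ->; rewrite ?mul0r ?mul1r. Qed.
Lemma F2addxx (c : 'F_2) : c + c = 0.
Proof. by case: (F2cases c) => ->; [rewrite addr0 | apply: val_inj]. Qed.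
Lemma F2opp (c : 'F_2) : - c = c.
Proof. by apply/eqP; rewrite eq_sym -subr_eq0 opprK F2addxx. Qed.

Section Bool.
Variable m : nat.
Local Notation V := 'rV['F_2]_m.
Implicit Types (S T U : {set 'I_m}) (x : V) (a b : {ffun {set 'I_m} -> 'F_2}).

Definition mono S x : 'F_2 := \prod_(i in S) x ord0 i.
Definition evalS a x : 'F_2 := \sum_S a S * mono S x.
Definition degle (f : V -> 'F_2) (r : nat) :=
  exists a, (forall x, evalS a x = f x) /\ forall S, a S != 0 -> (#|S| <= r)%N.

Lemma monoU S T x : mono S x * mono T x = mono (S :|: T) x.
Proof.
rewrite /mono !(big_mkcond (fun i => i \in _)) -big_split /=.
apply: eq_bigr => i _; rewrite inE.
by case: (i \in S); case: (i \in T); rewrite ?mul1r ?mulr1 ?F2mulxx.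
Qed.

Definition ind S : V := \row_i ((i \in S)%:R).

Lemma mono_ind S T : mono T (ind S) = (T \subset S)%:R.
Proof.
rewrite /mono /ind; under eq_bigr do rewrite mxE.
case: (boolP (T \subset S)) => h.
  by rewrite big1 // => i iT; rewrite (subsetP h i iT).
by case/subsetPn: h => i iT iS; rewrite (bigD1 i) //= (negbTE iS) mul0r.
Qed.

Lemma evalS0 a : (forall x, evalS a x = 0) -> forall S, a S = 0.
Proof.
move=> h.
have step S : (forall T, T \proper S -> a T = 0) -> a S = 0.
  move=> IH; have := h (ind S).
  rewrite /evalS (bigD1 S) //= mono_ind subxx mulr1 big1 ?addr0 //.
  move=> T hT; rewrite mono_ind; case: (boolP (T \subset S)) => hs; last by rewrite mulr0.
  by rewrite IH ?mul0r // properEneq hT hs.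
suff H n S : (#|S| <= n)%N -> a S = 0 by move=> S; apply: (H #|S|).
elim: n S => [|n IHn] S hS; apply: step => T /proper_card hT.
  by move: (leq_trans hT hS).
by apply: IHn; move: (leq_trans hT hS).
Qed.

Lemma evalS_inj a b : (forall x, evalS a x = evalS b x) -> a = b.
Proof.
move=> h; apply/ffunP => S.
have h0 : forall x, evalS [ffun S => a S - b S] x = 0.
  move=> x; rewrite /evalS.
  under eq_bigr do rewrite ffunE mulrBl.
  by rewrite sumrB -/(evalS a x) -/(evalS b x) h subrr.
by have := evalS0 h0 S; rewrite ffunE => /eqP; rewrite subr_eq0 => /eqP.
Qed.

Lemma card_V : #|{: V}| = (2 ^ m)%N.
Proof. by rewrite card_mx card_Fp // mul1n. Qed.

Lemma card_sets : #|{: {set 'I_m}}| = (2 ^ m)%N.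
Proof.
have -> : (2 ^ m = #|powerset [set: 'I_m]|)%N by rewrite card_powerset cardsT card_ord.
by rewrite powersetT cardsT.
Qed.

Lemma exists_coef (f : V -> 'F_2) : exists a, [forall x, evalS a x == f x].
Proof.
pose ev a : {ffun V -> 'F_2} := [ffun x => evalS a x].
have inj : injective ev.
  move=> a b /ffunP h; apply: evalS_inj => x; move: (h x); rewrite !ffunE.
  done.
have := @inj_card_onto _ _ ev inj _ [ffun x => f x].
rewrite !card_ffun card_V card_sets leqnn => /(_ isT) /codomP [a ha].
exists a; apply/forallP => x; move/ffunP: ha => /(_ x); rewrite !ffunE.
by move=> ->.
Qed.

Definition coef (f : V -> 'F_2) := xchoose (exists_coef f).

Lemma coefHE f x : evalS (coef f) x = f x.
Proof. by have /forallP /(_ x) /eqP := xchooseP (exists_coef f). Qed.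

Lemma coef_eq f a : (forall x, evalS a x = f x) -> coef f = a.
Proof. by move=> h; apply: evalS_inj => x; rewrite coefHE h. Qed.

Definition degS a := (\max_(S | a S != 0) #|S|.+1).-1.

Lemma degS_leP a r : (degS a <= r)%N <-> forall S, a S != 0 -> (#|S| <= r)%N.
Proof.
have e n : (n.-1 <= r)%N = (n <= r.+1)%N by case: n.
rewrite /degS e; split.
  by move/bigmax_leqP => h S /h.
by move=> h; apply/bigmax_leqP => S /h.
Qed.

Lemma degleP f r : degle f r <-> (degS (coef f) <= r)%N.
Proof.
split.
  by case=> a [ha hS]; rewrite (coef_eq ha); apply/degS_leP.
by move=> h; exists (coef f); split; [apply: coefHE | apply/degS_leP].
Qed.

Lemma degle_ext (f g : V -> 'F_2) r : (forall x, f x = g x) -> degle f r -> degle g r.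
Proof. by move=> e [a [ha hS]]; exists a; split => // x; rewrite ha e. Qed.

Lemma degle_mono (f : V -> 'F_2) r r' : (r <= r')%N -> degle f r -> degle f r'.
Proof. by move=> le [a [ha hS]]; exists a; split => // S /hS /leq_trans; apply. Qed.

Lemma degle_const (c : 'F_2) : degle (fun _ => c) 0.
Proof.
exists [ffun S => if S == set0 then c else 0]; split.
  move=> x; rewrite /evalS (bigD1 set0) //= ffunE eqxx big1 ?addr0.
    by rewrite /mono big_set0 mulr1.
  by move=> S /negbTE hS; rewrite ffunE hS mul0r.
by move=> S; rewrite ffunE; case: ifP => [/eqP -> | _]; rewrite ?cards0 ?eqxx.
Qed.

Lemma degle_coord (i : 'I_m) : degle (fun x => x ord0 i) 1.
Proof.
exists [ffun S => if S == [set i] then 1 else 0]; split.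
  move=> x; rewrite /evalS (bigD1 [set i]) //= ffunE eqxx big1 ?addr0.
    by rewrite /mono big_set1 mul1r.
  by move=> S /negbTE hS; rewrite ffunE hS mul0r.
by move=> S; rewrite ffunE; case: ifP => [/eqP -> | _]; rewrite ?cards1 ?eqxx.
Qed.

Lemma degle_add (f g : V -> 'F_2) r : degle f r -> degle g r -> degle (fun x => f x + g x) r.
Proof.
case=> a [ha hSa] [b [hb hSb]].
exists [ffun S => a S + b S]; split.
  move=> x; rewrite /evalS; under eq_bigr do rewrite ffunE mulrDl.
  by rewrite big_split /= -/(evalS a x) -/(evalS b x) ha hb.
move=> S; rewrite ffunE; case: (eqVneq (a S) 0) => [-> | /hSa] //.
by rewrite add0r => /hSb.
Qed.

Lemma degle_mul (f g : V -> 'F_2) r s : degle f r -> degle g s ->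
  degle (fun x => f x * g x) (r + s).
Proof.
case=> a [ha hSa] [b [hb hSb]].
exists [ffun U => \sum_S \sum_(T | S :|: T == U) a S * b T]; split.
  move=> x; rewrite -ha -hb /evalS mulr_suml.
  under eq_bigr do rewrite ffunE mulr_suml.
  rewrite exchange_big /=; apply: eq_bigr => S _.
  rewrite mulr_sumr.
  under eq_bigr => U _ do rewrite big_mkcond mulr_suml.
  rewrite exchange_big /=; apply: eq_bigr => T _.
  rewrite (bigD1 (S :|: T)) //= eqxx big1 => [|U /negbTE hU]; last by rewrite eq_sym hU mul0r.
  by rewrite addr0 mulrACA monoU.
move=> U; rewrite ffunE => h.
have [S _ hS] : exists2 S, true & (\sum_(T | S :|: T == U) a S * b T) != 0.
  apply/exists_inP; apply: contraNT h; rewrite negb_exists_in => /forall_inP h.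
  by rewrite big1 // => S _; apply/eqP/negbNE/h.
have [T /eqP hT hT0] : exists2 T, S :|: T == U & a S * b T != 0.
  apply/exists_inP; apply: contraNT hS; rewrite negb_exists_in => /forall_inP h'.
  by rewrite big1 // => T hT; apply/eqP/negbNE/h'.
rewrite -hT; apply: (leq_trans (leq_card_setU _ _)).
move: hT0; rewrite mulf_eq0 negb_or => /andP [/hSa h1 /hSb h2].
exact: leq_add.
Qed.

End Bool.

Section Bool2.
Variable m : nat.
Local Notation V := 'rV['F_2]_m.

Lemma degle_sum (I : Type) (s : seq I) (P : pred I) (h : I -> V -> 'F_2) r :
  (forall i, P i -> degle (h i) r) -> degle (fun x => \sum_(i <- s | P i) h i x) r.
Proof.
move=> H; elim: s => [|i s IH].
  apply: degle_ext (degle_mono _ (degle_const _ 0)) => // x.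
  by rewrite big_nil.
case hP: (P i).
  apply: degle_ext (degle_add (H i hP) IH) => x.
  by rewrite big_cons hP.
by apply: degle_ext IH => x; rewrite big_cons hP.
Qed.

Lemma degle_prod (I : Type) (s : seq I) (P : pred I) (h : I -> V -> 'F_2) (r : I -> nat) :
  (forall i, P i -> degle (h i) (r i)) ->
  degle (fun x => \prod_(i <- s | P i) h i x) (\sum_(i <- s | P i) r i).
Proof.
move=> H; elim: s => [|i s IH].
  apply: degle_ext (degle_mono _ (degle_const _ 1)) => // x.
  by rewrite big_nil.
rewrite big_cons; case hP: (P i).
  apply: degle_ext (degle_mul (H i hP) IH) => x.
  by rewrite big_cons hP.
by apply: degle_ext IH => x; rewrite big_cons hP.
Qed.

Lemma degle_scale (c : 'F_2) (f : V -> 'F_2) r : degle f r -> degle (fun x => c * f x) r.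
Proof. by move=> h; apply: degle_mul (degle_const _ c) h. Qed.

End Bool2.

Lemma add_zero (U W : zmodType) (A : U -> W) : {morph A : x y / x + y} -> A 0 = 0.
Proof. by move=> h; apply: (@addrI _ (A 0)); rewrite -h !addr0. Qed.

Lemma lin_expand m' (W : zmodType) (A : 'rV['F_2]_m' -> W) :
  {morph A : x y / x + y} ->
  forall x, A x = \sum_i (if x ord0 i == 0 then 0 else A (delta_mx 0 i)).
Proof.
move=> hA x; rewrite {1}(row_sum_delta x).
rewrite (big_morph A hA (add_zero hA)); apply: eq_bigr => i _.
case: (F2cases (x 0 i)) => ->; first by rewrite scale0r add_zero // eqxx.
by rewrite scale1r oner_eq0.
Qed.

Lemma degle_lin m (l : 'rV['F_2]_m -> 'F_2) : {morph l : x y / x + y} -> degle l 1.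
Proof.
move=> hl.
have H := @degle_sum m _ (index_enum 'I_m) xpredT
  (fun i x => x ord0 i * l (delta_mx 0 i)) 1
  (fun i _ => degle_mul (degle_coord i) (degle_const _ (l (delta_mx 0 i)))).
apply: degle_ext H => x; rewrite (lin_expand hl x); apply: eq_bigr => i _.
by case: (F2cases (x ord0 i)) => ->; rewrite ?mul0r ?mul1r ?eqxx ?oner_eq0.
Qed.

Lemma degle_comp m m' (A : 'rV['F_2]_m' -> 'rV['F_2]_m) (f : 'rV['F_2]_m -> 'F_2) r :
  {morph A : x y / x + y} -> degle f r -> degle (fun y => f (A y)) r.
Proof.
move=> hA [a [ha hS]].
have H : degle (fun y => \sum_S a S * mono S (A y)) r.
  apply: degle_sum => S _.
  case: (eqVneq (a S) 0) => [-> | /hS hSr].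
    apply: degle_ext (degle_mono _ (degle_const _ 0)) => // y.
    by rewrite mul0r.
  apply: degle_scale; rewrite /mono.
  have Hp : degle (fun y => \prod_(i <- index_enum 'I_m | i \in S) A y ord0 i)
      (\sum_(i <- index_enum 'I_m | i \in S) 1%N).
    by apply: degle_prod => i _; apply: degle_lin => y z; rewrite hA mxE.
  by apply: degle_mono Hp; rewrite sum1_card.
by apply: degle_ext H => y; rewrite -ha.
Qed.

Lemma degle1_affine m (f : 'rV['F_2]_m -> 'F_2) : degle f 1 ->
  forall x y, f (x + y) + f x + f y + f 0 = 0.
Proof.
case=> a [ha hS] x y; rewrite -!ha /evalS -!big_split /=.
apply: big1 => S _; rewrite -!mulrDr.
case: (eqVneq (a S) 0) => [->|/hS]; first by rewrite mul0r.
rewrite leq_eqVlt ltnS leqn0 cards_eq0 => /orP [/cards1P [i ->] | /eqP ->].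
  rewrite /mono !big_set1 !mxE.
  have -> : x ord0 i + y ord0 i + x ord0 i + y ord0 i =
    (x ord0 i + y ord0 i) + (x ord0 i + y ord0 i) by rewrite !addrA.
  by rewrite F2addxx addr0 mulr0.
by rewrite /mono !big_set0 F2addxx add0r F2addxx mulr0.
Qed.

Section Bridge.
Variable m : nat.
Implicit Types (S T : {set 'I_m}) (a : {ffun {set 'I_m} -> 'F_2}).

Definition mS S : 'X_{1..m} := [multinom (i \in S : nat) | i < m].
Lemma mSE S i : mS S i = (i \in S) :> nat.
Proof. by rewrite /mS mnmE. Qed.
Definition sOf (mo : 'X_{1..m}) : {set 'I_m} := [set i | mo i != 0%N].
Lemma sOfK : cancel mS sOf.
Proof. by move=> S; apply/setP => i; rewrite inE mSE; case: (i \in S). Qed.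
Lemma mS_inj : injective mS. Proof. exact: can_inj sOfK. Qed.

Definition toP a : {mpoly 'F_2[m]} := \sum_S a S *: 'X_[mS S].

Lemma toP_eval a (v : 'I_m -> 'F_2) : (toP a).@[v] = \sum_S a S * \prod_(i in S) v i.
Proof.
rewrite /toP (big_morph _ (mevalD v) (meval0 v)); apply: eq_bigr => S _.
rewrite mevalZ mevalX; congr (_ * _); rewrite [RHS]big_mkcond /=.
by apply: eq_bigr => i _; rewrite mSE; case: (i \in S); rewrite ?expr1 ?expr0.
Qed.

Lemma toP_coef a S : (toP a)@_(mS S) = a S.
Proof.
rewrite /toP (big_morph _ (mcoeffD _) (mcoeff0 _ _)) (bigD1 S) //= mcoeffZ mcoeffX eqxx mulr1.
rewrite big1 ?addr0 // => T hT; rewrite mcoeffZ mcoeffX.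
by rewrite (inj_eq mS_inj) (negbTE hT) mulr0.
Qed.

Lemma toP_coef0 a mo : (forall S, mo != mS S) -> (toP a)@_mo = 0.
Proof.
move=> h; rewrite /toP (big_morph _ (mcoeffD _) (mcoeff0 _ _)) big1 // => S _.
by rewrite mcoeffZ mcoeffX eq_sym (negbTE (h S)) mulr0.
Qed.

Lemma toP_reduced a : reduced (toP a).
Proof.
move=> mo; rewrite mcoeff_msupp => h i.
case: (pickP (fun S => mo == mS S)) => [S /eqP -> | hn].
  by rewrite mSE; case: (i \in S).
by move: h; rewrite toP_coef0 ?eqxx // => S; rewrite hn.
Qed.

Lemma reduced_toP (P : {mpoly 'F_2[m]}) : reduced P -> P = toP [ffun S => P@_(mS S)].
Proof.
move=> hP; apply/mpolyP => mo.
case: (boolP (mo \in msupp P)) => h.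
  have e : mo = mS (sOf mo).
    apply/mnmP => i; rewrite mSE inE; have := hP mo h i.
    by case: (mo i) => [|[|]].
  by rewrite e toP_coef ffunE.
have -> : P@_mo = 0 by apply/eqP; rewrite mcoeff_eq0.
case: (pickP (fun S => mo == mS S)) => [S /eqP e | hn].
  by rewrite e toP_coef ffunE -e; apply/esym/eqP; rewrite mcoeff_eq0.
by rewrite toP_coef0 // => S; rewrite hn.
Qed.

Lemma mdeg_mS S : mdeg (mS S) = #|S|.
Proof.
rewrite mdegE -sum1_card [RHS]big_mkcond /=; apply: eq_bigr => i _.
by rewrite mSE; case: (i \in S).
Qed.

Lemma toP_filter a : toP a =
  \sum_(mo <- map mS (enum [pred S | a S != 0])) a (sOf mo) *: 'X_[mo].
Proof.
rewrite big_map; under [RHS]eq_bigr do rewrite sOfK.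
rewrite big_enum /= /toP (bigID (fun S => a S != 0)) /= [X in _ + X]big1 ?addr0.
  by apply: eq_bigl => S; rewrite inE.
by move=> S /negbNE /eqP ->; rewrite scale0r.
Qed.

Lemma toP_deg a : anf_deg (toP a) = degS a.
Proof.
rewrite /anf_deg /degS msizeE; congr (_.-1).
have pe := @msupp_sumX _ _ (map mS (enum [pred S | a S != 0])) (fun mo => a (sOf mo)).
rewrite toP_filter (perm_big _ (pe _ _)).
- rewrite big_map big_enum /=; apply: eq_big => S; first by rewrite inE.
  by rewrite mdeg_mS.
- by rewrite map_inj_uniq ?enum_uniq //; apply: mS_inj.
- by move=> mo /mapP [S]; rewrite mem_enum inE => h ->; rewrite sOfK.
Qed.

Lemma bool_algdeg_coef (f : 'rV['F_2]_m -> 'F_2) : bool_algdeg f (degS (coef f)).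
Proof.
exists (toP (coef f)); split; first exact: toP_reduced.
split; last exact: toP_deg.
by move=> x; rewrite toP_eval -(coefHE f x).
Qed.

End Bridge.

Lemma L2FD (L : finFieldType) (two0 : (2%:R : L) = 0) (y z : L) :
  bit y -> bit z -> L2F (y + z) = L2F y + L2F z.
Proof.
rewrite /L2F => /orP [] /eqP -> /orP [] /eqP ->;
  rewrite ?addr0 ?add0r ?addxx ?eqxx ?oner_eq0 ?addr0 ?add0r // ?F2addxx //.
all: try exact: (F2addxx 1).
Qed.

Lemma addF2L (L : finFieldType) (W : zmodType) (A : L -> W) (c : 'F_2) (y : L) :
  {morph A : a b / a + b} -> A (F2L L c * y) = if c == 0 then 0 else A y.
Proof.
move=> hA; rewrite /F2L; case: (F2cases c) => ->.
  by rewrite eqxx mul0r (add_zero hA).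
by rewrite oner_eq0 mul1r.
Qed.

Lemma F2L_frob (L : finFieldType) (c : 'F_2) m : F2L L c ^+ (2 ^ m) = F2L L c.
Proof. by rewrite /F2L; case: eqP => _; rewrite ?expr0n ?expn_eq0 ?expr1n. Qed.

Section Part2.
Variables (L : finFieldType) (k tau : nat).
Hypothesis hk : (0 < k)%N.
Hypothesis hL : #|L| = (2 ^ (k + k))%N.
Local Notation q := (2 ^ k)%N.
Local Notation n := (k + k).
Variable u : 'I_k -> L.
Variable idx : 'I_tau -> 'I_k.
Variable F : {mpoly 'F_2[tau]}.
Hypothesis hu : forall i j : 'I_k, (i < j)%N -> inFk k (u i * u j ^+ (2 ^ k)).
Hypothesis hF : reduced F.
Hypothesis hind : F2_lin_indep (fun j => u (idx j)).
Local Notation d := (anf_deg F).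
Hypothesis hd : (2 <= d)%N.
Hypothesis htk : (tau <= k)%N.

Let two0 := two0_of hL.
Let v := fun j => u (idx j).

Variable phi : 'rV['F_2]_n -> L.
Variable psi : L -> 'rV['F_2]_k.
Hypothesis phiD : {morph phi : a b / a + b}.
Hypothesis phib : bijective phi.
Hypothesis psiD : {morph psi : a b / a + b}.
Hypothesis psiI : {in inFk k &, injective psi}.
Hypothesis psiS : forall w, exists2 y, inFk k y & psi y = w.

Definition Nq (y : L) := y ^+ (q + 1).
Definition Gc x := F.@[fun i => L2F (Tr n (v i * phi x))].
Definition Qf (j : 'I_k) x := psi (Nq (phi x)) ord0 j.
Definition pp (j : 'I_k) := psi 1 ord0 j.
Definition fj (j : 'I_k) x := psi (Hfun n u idx F (phi x)) ord0 j.

Lemma rhoD (j : 'I_k) : {morph (fun y => psi y ord0 j) : a b / a + b}.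
Proof. by move=> a b /=; rewrite psiD mxE. Qed.

Lemma f_dec j x : fj j x = Qf j x + Gc x * pp j.
Proof.
rewrite /fj /Hfun psiD mxE; congr (_ + _).
rewrite -[F2L L _]mulr1 (addF2L _ _ (rhoD j)) /pp.
have -> : F.@[fun j => L2F (Tr n (u (idx j) * phi x))] = Gc x by [].
by case: (F2cases (Gc x)) => -> ; rewrite ?eqxx ?mul0r ?oner_eq0 ?mul1r.
Qed.

Let e (i : 'I_n) := phi (delta_mx 0 i).

Lemma phi_expand x : phi x = \sum_i F2L L (x ord0 i) * e i.
Proof.
rewrite (lin_expand phiD x); apply: eq_bigr => i _.
by rewrite /F2L; case: eqP => _; rewrite ?mul0r ?mul1r.
Qed.

Lemma degQ j : degle (Qf j) 2.
Proof.
pose rho := fun y => psi y ord0 j.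
have H : degle (fun x => \sum_i \sum_i' x ord0 i * (x ord0 i' * rho (e i ^+ q * e i'))) 2.
  apply: degle_sum => i _; apply: degle_sum => i' _.
  apply: (degle_mul (r := 1) (s := 1)); first exact: degle_coord.
  apply: degle_mono (degle_mul (degle_coord i') (degle_const _ _)) => //.
apply: degle_ext H => x.
rewrite /Qf /Nq expq1 phi_expand frob_sum // big_distrlr /=.
rewrite (big_morph _ (rhoD j) (add_zero (rhoD j))); apply: eq_bigr => i _.
rewrite (big_morph _ (rhoD j) (add_zero (rhoD j))); apply: eq_bigr => i' _.
rewrite exprMn F2L_frob mulrACA -mulrA (addF2L _ _ (rhoD j)) (addF2L _ _ (rhoD j)).
by case: (F2cases (x ord0 i)) => ->; case: (F2cases (x ord0 i')) => ->;
  rewrite ?eqxx ?oner_eq0 ?mul0r ?mul1r ?mulr0.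
Qed.

Definition Fb (y : 'rV['F_2]_tau) := F.@[fun i => y ord0 i].
Definition Lam x : 'rV['F_2]_tau := \row_i L2F (Tr n (v i * phi x)).

Lemma Gc_Lam x : Gc x = Fb (Lam x).
Proof. by rewrite /Gc /Fb; apply: meval_eq => i; rewrite mxE. Qed.

Lemma LamD : {morph Lam : a b / a + b}.
Proof.
move=> a b; apply/matrixP => i j; rewrite !mxE phiD mulrDr TrD // L2FD //;
  exact: bitTrn.
Qed.

Let aF := [ffun S : {set 'I_tau} => F@_(mS S)].

Lemma coef_Fb : coef Fb = aF.
Proof.
apply: coef_eq => y; rewrite /Fb [in RHS](reduced_toP hF) toP_eval.
by rewrite /evalS /mono.
Qed.

Lemma degFbP r : degle Fb r <-> (d <= r)%N.
Proof.
rewrite degleP coef_Fb.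
by rewrite [in X in _ <-> X](reduced_toP hF) toP_deg.
Qed.

Lemma d_le_tau : (d <= tau)%N.
Proof.
rewrite (reduced_toP hF) toP_deg; apply/degS_leP => S _.
by apply: (leq_trans (max_card _)); rewrite card_ord.
Qed.

Lemma exists_dual (Z : {set 'I_tau}) : exists y : L, zset k v y = Z.
Proof.
case: (pickP (fun y => zset k v y == Z)) => [y /eqP h | hn]; first by exists y.
exfalso.
pose S := \sum_(y : L) \sum_(s : {set 'I_tau}) chi s (zset k v y) * chi s Z.
have h1 : S = 0.
  apply: big1 => y _; under eq_bigr do rewrite chiM.
  by rewrite chi_sum sdiff0 hn.
have h2 : S = (#|L|)%:R.
  rewrite /S exchange_big /=.
  transitivity (\sum_(s : {set 'I_tau}) chi s Z * \sum_(y : L) sgnL (Tr n (vs v s * y))).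
    apply: eq_bigr => s _; rewrite mulr_sumr; apply: eq_bigr => y _.
    by rewrite (hchi hL two0) mulrC.
  under eq_bigr => s _ do rewrite (charsum hk hL two0).
  rewrite (bigD1 set0) //= big1 => [|s hs].
    by rewrite /vs big_set0 eqxx /chi big_set0 mul1r; apply: addr0.
  case: eqP => [h0|]; last by rewrite mulr0.
  by move: hs; rewrite (hind h0) eqxx.
move: h1; rewrite h2 => /eqP; rewrite pnatr_eq0 hL expn_eq0.
done.
Qed.

Lemma dual_basis : exists xj : 'I_tau -> 'rV['F_2]_n, forall j, Lam (xj j) = delta_mx 0 j.
Proof.
have [yj hyj] := fin_all_exists (fun j => exists_dual [set j]).
case: phib => phiinv phiK phiinvK.
exists (fun j => phiinv (yj j)) => j; apply/matrixP => i0 i.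
rewrite !mxE phiinvK ord1 eqxx /=.
move/setP: (hyj j) => /(_ i); rewrite !inE /L2F => h.
by rewrite -h; case: (Tr _ _ == 0).
Qed.

Lemma degGcP r : degle Gc r <-> (d <= r)%N.
Proof.
have [xj hxj] := dual_basis.
pose R (z : 'rV['F_2]_tau) := \sum_j z ord0 j *: xj j.
have RD : {morph R : a b / a + b}.
  move=> a b; rewrite /R -big_split /=; apply: eq_bigr => j _.
  by rewrite mxE scalerDl.
have LamZ c x : Lam (c *: x) = c *: Lam x.
  case: (F2cases c) => ->; last by rewrite !scale1r.
  by rewrite !scale0r (add_zero LamD).
have LamR z : Lam (R z) = z.
  rewrite /R (big_morph _ LamD (add_zero LamD)) [RHS]row_sum_delta.
  by apply: eq_bigr => j _; rewrite LamZ hxj.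
split.
  move=> h; apply/degFbP; have := degle_comp RD h.
  by apply: degle_ext => y; rewrite Gc_Lam LamR.
move=> h; have := degle_comp LamD ((degFbP r).2 h).
by apply: degle_ext => x; rewrite Gc_Lam.
Qed.

Lemma psi0 : psi 0 = 0. Proof. exact: add_zero psiD. Qed.

Lemma p_nz : exists j0, pp j0 = 1.
Proof.
have h1 : psi 1 != 0.
  apply/eqP => h; have : (1 : L) = 0.
    apply: psiI; rewrite ?unfold_in; [apply: inFk1 | apply: inFk0 | by rewrite h psi0].
  by move/eqP; rewrite oner_eq0.
case: (pickP (fun j => pp j != 0)) => [j0 hj0 | hn].
  by exists j0; case: (F2cases (pp j0)) hj0 => ->; rewrite ?eqxx.
exfalso; move/negP: h1; apply; apply/eqP/matrixP => i0 j.
by rewrite ord1 mxE; move: (hn j); rewrite /pp => /negbFE /eqP.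
Qed.

Lemma exists_hi : exists j, ~~ (degS (coef (fj j)) <= d.-1)%N.
Proof.
have [j0 hj0] := p_nz.
have Qle j r : (2 <= r)%N -> degle (Qf j) r by move=> hr; apply: degle_mono hr (degQ j).
case: (ltngtP d 2) => hd2; first by move: hd; rewrite leqNgt hd2.
  exists j0; apply/negP => /degleP h.
  have : degle Gc d.-1.
    apply: degle_ext (degle_add h (Qle j0 _ _)); last by move: hd2; clear; lia.
    by move=> x; rewrite f_dec hj0 mulr1 addrAC F2addxx add0r.
  by move/degGcP; move: hd2; clear; lia.
(* d = 2 *)
case: (pickP (fun j => ~~ (degS (coef (fj j)) <= d.-1)%N)) => [j hj | hn].
  by exists j.
exfalso.
have hle j : degle (fj j) 1.
  by apply/degleP; move: (hn j) => /negbFE; rewrite hd2.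
have k2 : (1 < k)%N by apply: (leq_trans _ htk); rewrite -hd2 d_le_tau.
have [j1 hj1] : exists j1 : 'I_k, j1 != j0.
  case: (eqVneq j0 (Ordinal hk)) => h.
    by exists (Ordinal k2); rewrite h; apply/eqP => /(congr1 val).
  by exists (Ordinal hk); rewrite eq_sym.
have [w hw hpw] := psiS (delta_mx 0 j1).
have [th0 hth0] := notFq hk hL.
set t0 := th0 + th0 ^+ q.
have t00 : t0 != 0.
  by apply: contra hth0; rewrite /t0 addr_eq0 oppL // eq_sym.
have t0q : t0 ^+ q = t0 by rewrite /t0 frobD // xqq // addrC.
pose th := th0 / t0.
have hth : th ^+ q + th = 1.
  by rewrite /th exprMn exprVn t0q -mulrDl addrC -/t0 mulfV.
pose rho y := psi y ord0 j1 + pp j1 * psi y ord0 j0.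
have rhoD' : {morph rho : a b / a + b}.
  move=> a b; rewrite /rho psiD !mxE mulrDr.
  by rewrite addrACA.
pose h x := fj j1 x + pp j1 * fj j0 x.
have hdeg : degle h 1.
  by apply: degle_add (hle j1) (degle_scale _ (hle j0)).
have hrho x : h x = rho (Nq (phi x)).
  rewrite /h !f_dec hj0 mulr1 /rho /Qf.
  set A := psi _ ord0 j1; set B := psi _ ord0 j0; set G := Gc x; set P := pp j1.
  have -> : A + G * P + P * (B + G) = A + P * B + (G * P + G * P) by clear; ring.
  by rewrite F2addxx addr0.
case: phib => phiinv phiK phiinvK.
have := degle1_affine hdeg (phiinv (w * th)) (phiinv 1).
rewrite !hrho phiD !phiinvK (add_zero phiD) -!rhoD'.
have -> : Nq (w * th + 1) + Nq (w * th) + Nq 1 + Nq 0 = w.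
  rewrite /Nq !expq1 frobD // expr1n mulr0 addr0 mulr1.
  set X := w * th.
  have -> : (X ^+ q + 1) * (X + 1) + X ^+ q * X + 1 = X ^+ q + X + 2%:R * (X ^+ q * X + 1) by clear; ring.
  rewrite two0 mul0r addr0 /X exprMn (eqP hw) -mulrDr hth; apply: mulr1.
rewrite /rho hpw !mxE !eqxx /= eq_sym (negbTE hj1) mulr0 addr0.
by move/eqP; rewrite oner_eq0.
Qed.

Lemma part2_main : exists D : 'I_k -> nat,
  (forall j, bool_algdeg (fun x => psi (Hfun n u idx F (phi x)) ord0 j) (D j)) /\
  \max_(j < k) D j = d.
Proof.
exists (fun j => degS (coef (fj j))); split.
  by move=> j; apply: bool_algdeg_coef.
apply/eqP; rewrite eqn_leq; apply/andP; split.
  apply/bigmax_leqP => j _; apply/degleP.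
  have H1 : degle (fun x => Gc x * pp j) d.
    by apply: degle_mono (degle_mul ((degGcP d).2 (leqnn d)) (degle_const _ (pp j))); rewrite addn0.
  by apply: degle_ext (degle_add (degle_mono hd (degQ j)) H1) => x; rewrite f_dec.
have [j hj] := exists_hi.
apply: leq_trans (leq_bigmax j) => /=.
by move: hj hd; clear; lia.
Qed.

End Part2.

Unset Implicit Arguments.
Theorem theorem5 (n k tau : nat) (L : finFieldType) (u : 'I_k -> L)
  (idx : 'I_tau -> 'I_k) (F : {mpoly 'F_2[tau]}) (d : nat) :
  n = (2 * k)%N ->
  #|L| = (2 ^ n)%N ->
  (1 <= tau <= k)%N ->
  injective u ->
  (forall i j : 'I_k, (i < j)%N ->
     inFk k (u i * u j ^+ (2 ^ k)) /\ u i * u j ^+ (2 ^ k) != 0) ->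
  injective idx ->
  reduced F ->
  anf_deg F = d ->
  vbent n k (Hfun n u idx F) /\
  (F2_lin_indep (fun j => u (idx j)) -> (2 <= d)%N ->
     vec_algdeg n k (Hfun n u idx F) d).
Proof.
move=> hn hL /andP [ht1 htk] _ hu _ hF hd.
have n_eq : n = (k + k)%N by rewrite hn mul2n addnn.
subst d; rewrite n_eq in hL *.
have hk : (0 < k)%N by apply: leq_trans htk.
have hu' : forall i j : 'I_k, (i < j)%N -> inFk k (u i * u j ^+ (2 ^ k)).
  by move=> i j hij; case: (hu i j hij).
split; first exact: (part1 hk hL idx F hu').
move=> hind hd2 phi psi phiD phib psiD psiI psiS.
exact: (part2_main hk hL hF hind hd2 htk phiD phib psiD psiI psiS).
Qed.
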